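(* Let $d\ge2$, let $\mathcal{S}$ be a simple-minded system of $A_n^{dn}$-$\underline{\mathrm{mod}}$ with associated permutation $\sigma$, let $i\in\underline{n}$, and let $s_i$ be the size of the $\sigma$-orbit of $i$. For $0\le j\le s_i-1$ let $M_{ij}\in\mathcal{S}$ be the object with top $S_{\sigma^j(i)}$ and socle $S_{\sigma^{j+1}(i)}$, and write $M_{ij}=M^{\sigma^j(i)}_{\sigma^{j+1}(i),l_{ij}}$ with $l_{ij}\ge0$. Then there is at most one $j\in\{0,\dots,s_i-1\}$ with $l_{ij}=0$.
   Context: $A_n^{dn}=kQ/I$ ($k$ algebraically closed), $Q$ the cyclic quiver with vertices $1,\dots,n$ and arrows $i\to i+1$, $n\to1$, $I$ generated by all paths of length $dn+1$. $M^a_{b,t}$ is the indecomposable (uniserial) module with top $S_a$, socle $S_b$, and $S_a$ occurring $t+1$ times as composition factor. $\underline{\mathrm{Hom}}$ is Hom modulo maps factoring through projectives. A simple-minded system (sms) is a family $\mathcal{S}$ of indecomposable non-projective modules with $\underline{\mathrm{Hom}}(S,T)=0$ for distinct $S,T\in\mathcal{S}$, $\underline{\mathrm{Hom}}(S,S)\cong k$, and such that each indecomposable non-projective $X$ has $\underline{\mathrm{Hom}}(X,S)\neq0$ for some $S\in\mathcal{S}$. For an sms each simple is the top of exactly one and the socle of exactly one object; the associated permutation $\sigma$ of $\underline{n}=\{1,\dots,n\}$ is $\sigma(a)=b$ if some object has top $S_a$ and socle $S_b$. *)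

(* Defs.v *)
From mathcomp Require Import all_boot all_order all_algebra all_fingroup.
Unset Printing Implicit Defensive.
Import GRing.Theory.
Local Open Scope ring_scope.

(* Modules over A_n^{dn} = kQ/I (cyclic quiver 1..n, arrows v -> v+1, paths of
   length dn+1 are zero) are realised as representations.  Vertices are
   labelled 0..n-1 (mod n).  The uniserial module with top S_a and length l
   has basis e_0,...,e_{l-1}, e_k lying at vertex (a+k) mod n, and the arrows
   act (on row vectors) by the shift e_k |-> e_{k+1}, e_{l-1} |-> 0. *)

Definition shiftmx (K : fieldType) (l : nat) : 'M[K]_l :=
  \matrix_(i, j) ((nat_of_ord j == (nat_of_ord i).+1)%:R).

(* F : 'M_(l,m) (acting on row vectors) is a module homomorphism from the
   uniserial module (top a, length l) to the uniserial module (top c, length m):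
   it preserves the vertex decomposition and commutes with the arrows. *)
Definition is_hom {K : fieldType} (n : nat) (a l c m : nat) (F : 'M[K]_(l, m)) : Prop :=
  (forall (i : 'I_l) (j : 'I_m), F i j != 0 -> ((a + i) %% n = (c + j) %% n)%N) /\
  shiftmx K l *m F = F *m shiftmx K m.

(* F factors through a projective module: through a finite direct sum of
   indecomposable projectives P_c (= uniserial of top c and length dn+1). *)
Definition factors_proj {K : fieldType} (n d : nat) (a l c m : nat)
    (F : 'M[K]_(l, m)) : Prop :=
  exists s : seq ('I_n * 'M[K]_(l, (d * n)%N.+1) * 'M[K]_((d * n)%N.+1, m)),
    (forall x, x \in s ->
        is_hom n a l x.1.1 (d * n)%N.+1 x.1.2 /\ is_hom n x.1.1 (d * n)%N.+1 c m x.2)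
    /\ F = \sum_(x <- s) (x.1.2 *m x.2).

(* Indecomposable non-projective modules up to isomorphism: uniserial modules
   with top a : 'I_n and length L = x.2 + 1 with 1 <= L <= dn. *)
Definition lab (n d : nat) := ('I_n * 'I_(d * n)%N)%type.

Definition top {n d : nat} (X : lab n d) : nat := X.1.
Definition socle {n d : nat} (X : lab n d) : nat := ((X.1 + X.2) %% n)%N.
(* X = M^a_{b,t}: S_a occurs t+1 times as composition factor *)
Definition tpar {n d : nat} (X : lab n d) : nat := (X.2 %/ n)%N.

Definition stHom_zero (K : fieldType) {n d : nat} (X Y : lab n d) : Prop :=
  forall F : 'M[K]_(X.2.+1, Y.2.+1),
    is_hom n X.1 X.2.+1 Y.1 Y.2.+1 F -> factors_proj n d X.1 X.2.+1 Y.1 Y.2.+1 F.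

Definition stHom_is_k (K : fieldType) {n d : nat} (X Y : lab n d) : Prop :=
  exists F : 'M[K]_(X.2.+1, Y.2.+1),
    [/\ is_hom n X.1 X.2.+1 Y.1 Y.2.+1 F,
        ~ factors_proj n d X.1 X.2.+1 Y.1 Y.2.+1 F &
        forall G : 'M[K]_(X.2.+1, Y.2.+1), is_hom n X.1 X.2.+1 Y.1 Y.2.+1 G ->
          exists c : K, factors_proj n d X.1 X.2.+1 Y.1 Y.2.+1 (G - c *: F)].

Definition is_sms (K : fieldType) {n d : nat} (S : {set lab n d}) : Prop :=
  [/\ (forall X Y, X \in S -> Y \in S -> X != Y -> stHom_zero K X Y),
      (forall X, X \in S -> stHom_is_k K X X) &
      (forall Z : lab n d, exists2 X, X \in S & ~ stHom_zero K Z X)].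

(* Main.v *)
Require Import Defs.
From mathcomp Require Import all_boot all_order all_algebra all_fingroup.
From mathcomp Require Import zify.
Lemma modrel n P r : (P < n)%N -> (r < n)%N -> (((P + r) %% n) + n - P) %% n = r.
Proof.
move=> hP hr.
rewrite -addnBA; last by apply: ltnW.
rewrite modnDml.
have -> : (P + r + (n - P) = r + n)%N by lia.
by rewrite modnDr modn_small.
Qed.

Lemma modD_mul n d x : ((x + d * n) %% n = x %% n)%N.
Proof. by rewrite addnC modnMDl. Qed.

Lemma comb (n d m : nat) (a s : nat -> nat) :
  (2 <= d)%N -> (0 < n)%N ->
  (forall k, a k < n)%N -> (forall k, s k < d * n)%N ->
  (forall k, a k.+1 = (a k + s k) %% n)%N ->
  (s 0 < n)%N -> (s m < n)%N -> (0 < m)%N ->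
  (forall k, 0 < k < m -> n <= s k)%N ->
  (forall k, 0 < k <= m -> a k != a 0)%N ->
  (forall k, 0 < k < m -> a k != a m)%N ->
  (forall u v t, a u != a v -> t %% n = a u -> a v <= t -> t <= a v + s v ->
     a v + s v <= t + s u -> t + s u < a v + d * n -> False)%N ->
  False.
Proof.
move=> hd hn ha hs hsoc hs0 hsm hm hlong hne0 hnem NH.
set P := a 0%N. set c := s 0%N. set D := (d * n)%N.
have hDn : (2 * n <= D)%N by rewrite /D leq_mul2r hd orbT.
have hP : (P < n)%N by apply: ha.
pose R k := ((a k + n - P) %% n)%N.
have Hgen : forall k, (0 < k < m)%N -> (R k <= c)%N -> a k = ((P + R k) %% n)%N ->
   (D <= R k + s k)%N /\ a k.+1 = ((P + (R k + s k - D)) %% n)%N.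
  move=> k /andP[k0 km] hRk hak.
  have hD : (D <= R k + s k)%N.
    rewrite leqNgt; apply/negP => hlt.
    apply: (NH k 0%N (P + R k)%N).
    - by apply: hne0; rewrite k0 ltnW.
    - by [].
    - lia.
    - rewrite /c; lia.
    - have := hlong k; rewrite k0 km => /(_ isT). rewrite /c; lia.
    - rewrite /D; lia.
  split => //.
  rewrite hsoc hak modnDml.
  have -> : (P + R k + s k = (P + (R k + s k - D)) + d * n)%N by rewrite /D; lia.
  by rewrite modD_mul.
have HR : forall k, (0 < k <= m)%N -> (R k <= c)%N /\ a k = ((P + R k) %% n)%N.
  elim => [|k IH] //.
  case: k IH => [|k] IH hk.
    have e1 : a 1%N = ((P + c) %% n)%N by rewrite hsoc.
    have -> : R 1%N = c by rewrite /R e1 modrel.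
    by [].
  have hk' : (0 < k.+1 < m)%N by lia.
  have [h1 h2] := IH (ltac:(lia)).
  have [h3 h4] := Hgen _ hk' h1 h2.
  have hr : (R k.+1 + s k.+1 - D < n)%N.
    have := hs k.+1; rewrite -/D; lia.
  have -> : R k.+2 = (R k.+1 + s k.+1 - D)%N by rewrite /R h4 modrel.
  split=> //.
  have := hs k.+1; rewrite -/D; lia.
have Hstep : forall k, (0 < k < m)%N -> (D <= R k + s k)%N /\ R k.+1 = (R k + s k - D)%N.
  move=> k hk.
  have [h1 h2] := HR k (ltac:(lia)).
  have [h3 h4] := Hgen _ hk h1 h2.
  split=> //.
  rewrite /R h4 modrel //.
  have := hs k; rewrite -/D; lia.
have Hmono : forall j k, (k + j = m)%N -> (0 < k)%N -> (R m <= R k)%N.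
  elim => [|j IH] k hkj hk.
    by rewrite addn0 in hkj; rewrite hkj.
  have := IH k.+1 (ltac:(lia)) isT.
  have [h1 h2] := Hstep k (ltac:(lia)).
  have := hs k; rewrite -/D; lia.
have [hRm ham] := HR m (ltac:(lia)).
have hV : (R m + s m < c)%N.
  rewrite ltnNge; apply/negP => hle.
  apply: (NH m 0%N (P + R m)%N).
  - by apply: hne0; rewrite hm leqnn.
  - by [].
  - lia.
  - rewrite /c; lia.
  - rewrite /c; lia.
  - rewrite /D /c in hle hRm *; lia.
have hR1 : R 1%N = c.
  have e1 : a 1%N = ((P + c) %% n)%N by rewrite hsoc.
  by rewrite /R e1 modrel.
have Hfind : forall j k, (k + j = m)%N -> (0 < k)%N -> (R m + s m < R k)%N ->
   exists k', [/\ (k <= k')%N, (k' < m)%N, (R k'.+1 <= R m + s m)%N & (R m + s m < R k')%N].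
  elim => [|j IH] k hkj hk hlt.
    rewrite addn0 in hkj; subst k; lia.
  case: (leqP (R k.+1) (R m + s m)) => h.
    exists k; split => //; lia.
  have [k' [h1 h2 h3 h4]] := IH k.+1 (ltac:(lia)) isT h.
  exists k'; split => //; lia.
have [k' [hk1 hk2 hk3 hk4]] := Hfind m.-1 1%N (ltac:(lia)) isT (ltac:(rewrite hR1; lia)).
have [hst1 hst2] := Hstep k' (ltac:(lia)).
have hmono := Hmono (m - k'.+1)%N k'.+1 (ltac:(lia)) isT.
have [hRk' hak'] := HR k' (ltac:(lia)).
apply: (NH m k' (a k' + (D + R m - R k'))%N).
- by rewrite eq_sym; apply: hnem; lia.
- rewrite hak' modnDml ham.
  have -> : (P + R k' + (D + R m - R k') = (P + R m) + d * n)%N by rewrite /D; lia.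
  by rewrite modD_mul.
- lia.
- lia.
- lia.
- lia.
Qed.
Import GRing.Theory.
Local Open Scope ring_scope.
Section Shift.
Variable K : fieldType.

Lemma shiftL_some l m (A : 'M[K]_(l, m)) (i i' : 'I_l) j :
  nat_of_ord i' = i.+1 -> (shiftmx K l *m A) i j = A i' j.
Proof.
move=> h; rewrite mxE (bigD1 i') //= !mxE h eqxx mul1r big1 ?addr0 // => k hk.
rewrite mxE -h.
have -> : (nat_of_ord k == nat_of_ord i') = false by apply/negbTE.
by rewrite mul0r.
Qed.

Lemma shiftL_none l m (A : 'M[K]_(l, m)) (i : 'I_l) j :
  i.+1 = l -> (shiftmx K l *m A) i j = 0.
Proof.
move=> h; rewrite mxE big1 // => k _; rewrite mxE.
have hk : (nat_of_ord k < i.+1)%N by rewrite h.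
by rewrite (ltn_eqF hk) mul0r.
Qed.

Lemma shiftR_some l m (A : 'M[K]_(l, m)) i (j j' : 'I_m) :
  nat_of_ord j = j'.+1 -> (A *m shiftmx K m) i j = A i j'.
Proof.
move=> h; rewrite mxE (bigD1 j') //= !mxE h eqxx mulr1 big1 ?addr0 // => k hk.
rewrite mxE h.
have -> : (j'.+1 == k.+1)%N = false.
  by rewrite eqSS; apply/negbTE; rewrite eq_sym.
by rewrite mulr0.
Qed.

Lemma shiftR_none l m (A : 'M[K]_(l, m)) i (j : 'I_m) :
  nat_of_ord j = 0%N -> (A *m shiftmx K m) i j = 0.
Proof. by move=> h; rewrite mxE big1 // => k _; rewrite mxE h mulr0. Qed.

Lemma homG_zero l N (G : 'M[K]_(l.+1, N)) :
  shiftmx K l.+1 *m G = G *m shiftmx K N ->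
  forall (i : 'I_l.+1) (k : 'I_N), (k + (l - i) < N.-1)%N -> G i k = 0.
Proof.
move=> hG.
suff: forall e (i : 'I_l.+1) (k : 'I_N), (l - i)%N = e -> (k + e < N.-1)%N -> G i k = 0.
  by move=> H i k; apply: H.
elim=> [|e IH] i k he hk.
  have hkN : (k.+1 < N)%N by lia.
  have hi : i.+1 = l.+1 by have := ltn_ord i; lia.
  have := congr1 (fun M : 'M[K]_(l.+1, N) => M i (Ordinal hkN)) hG.
  by rewrite shiftL_none // (@shiftR_some _ _ G i (Ordinal hkN) k).
have hkN : (k.+1 < N)%N by lia.
have hiN : (i.+1 < l.+1)%N by lia.
have := congr1 (fun M : 'M[K]_(l.+1, N) => M i (Ordinal hkN)) hG.
rewrite (@shiftL_some _ _ G i (Ordinal hiN)) // (@shiftR_some _ _ G i (Ordinal hkN) k) // => <-.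
apply: IH => /=; lia.
Qed.

Lemma homH_zero N m (H : 'M[K]_(N, m)) :
  shiftmx K N *m H = H *m shiftmx K m ->
  forall (k : 'I_N) (j : 'I_m), (j < k)%N -> H k j = 0.
Proof.
move=> hH k j; move: k.
suff: forall jj (k : 'I_N) (j : 'I_m), nat_of_ord j = jj -> (j < k)%N -> H k j = 0.
  by move=> S k; apply: S.
elim=> [|jj IH] k j' hj hjk.
  have hk1 : (k.-1 < N)%N by have := ltn_ord k; lia.
  have := congr1 (fun M : 'M[K]_(N, m) => M (Ordinal hk1) j') hH.
  rewrite (@shiftL_some _ _ H (Ordinal hk1) k) /=; last by lia.
  by rewrite shiftR_none.
have hk1 : (k.-1 < N)%N by have := ltn_ord k; lia.
have hj1 : (jj < m)%N by have := ltn_ord j'; lia.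
have := congr1 (fun M : 'M[K]_(N, m) => M (Ordinal hk1) j') hH.
rewrite (@shiftL_some _ _ H (Ordinal hk1) k) /=; last by lia.
rewrite (@shiftR_some _ _ H _ j' (Ordinal hj1)) // => ->.
apply: IH => /=; lia.
Qed.

Lemma factors_first_row n d a l c m (F : 'M[K]_(l.+1, m)) :
  factors_proj n d a l.+1 c m F -> forall j : 'I_m, (j + l < d * n)%N -> F ord0 j = 0.
Proof.
case=> sq [hsq ->] j hj.
rewrite summxE big1_seq // => x /hsq [[_ hG] [_ hH]].
rewrite mxE big1 // => k _.
case: (ltnP k (d * n - l)) => hk.
  rewrite (@homG_zero _ _ _ hG ord0 k) ?mul0r //= subn0; lia.
rewrite (@homH_zero _ _ _ hH k j) ?mulr0 //; lia.
Qed.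

End Shift.
Lemma nonzero_stHom (K : fieldType) n d (X Y : lab n d) t :
  (t %% n = X.1)%N -> (Y.1 <= t)%N -> (t <= Y.1 + Y.2)%N ->
  (Y.1 + Y.2 <= t + X.2)%N -> (t + X.2 < Y.1 + d * n)%N -> ~ stHom_zero K X Y.
Proof.
move=> ht h1 h2 h3 h4 HZ.
set off := (t - Y.1)%N.
pose F : 'M[K]_(X.2.+1, Y.2.+1) := \matrix_(i, j) ((nat_of_ord j == i + off)%N%:R).
have hoff : (off < Y.2.+1)%N by rewrite /off; lia.
have hF : is_hom n X.1 X.2.+1 Y.1 Y.2.+1 F.
  split.
  - move=> i j; rewrite mxE; case: (eqVneq (nat_of_ord j) (i + off)%N) => [-> _|ne]; last by rewrite eqxx.
    rewrite -ht modnDml.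
    have -> : (Y.1 + (i + off) = t + i)%N by rewrite /off; lia.
    by [].
  - apply/matrixP => i j.
    case: (ltnP i.+1 X.2.+1) => hi.
    + rewrite (@shiftL_some K _ _ F i (Ordinal hi)) //.
      case hj: (nat_of_ord j) => [|j'].
      * rewrite shiftR_none // !mxE /= hj.
        by rewrite addSn.
      * have hj' : (j' < Y.2.+1)%N by have := ltn_ord j; rewrite hj; lia.
        rewrite (@shiftR_some K _ _ F i j (Ordinal hj')) // !mxE /= hj.
        by rewrite addSn eqSS.
    + have hi' : i.+1 = X.2.+1 by have := ltn_ord i; lia.
      rewrite shiftL_none //.
      case hj: (nat_of_ord j) => [|j'].
      * by rewrite shiftR_none.
      * have hj' : (j' < Y.2.+1)%N by have := ltn_ord j; rewrite hj; lia.
        rewrite (@shiftR_some K _ _ F i j (Ordinal hj')) // !mxE /=.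
        have -> : (j' == i + off)%N = false.
          apply/negbTE/eqP => e.
          have := ltn_ord j; rewrite hj e /off; lia.
        by [].
have := @factors_first_row K _ _ _ _ _ _ F (HZ F hF) (Ordinal hoff).
rewrite mxE /= add0n eqxx => H.
have : (1 : K) = 0 by apply: H; rewrite /off; lia.
by move/eqP; rewrite oner_eq0.
Qed.
Local Close Scope ring_scope.
Lemma key (k : closedFieldType) (n d : nat) (hn : (0 < n)%N) (hd : (2 <= d)%N)
  (S : {set lab n d})
  (Hzero : forall X Y, X \in S -> Y \in S -> X != Y -> stHom_zero k X Y)
  (sigma : {perm 'I_n})
  (hsigma : forall a : 'I_n, exists2 X, X \in S & top X = a /\ socle X = sigma a)
  (i : 'I_n) (j1 j2 : nat) (X1 X2 : lab n d) :
    (j2 < #|porbit sigma i|)%N ->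
    X1 \in S -> X2 \in S ->
    top X1 = (sigma ^+ j1)%g i -> socle X1 = (sigma ^+ j1.+1)%g i ->
    top X2 = (sigma ^+ j2)%g i -> socle X2 = (sigma ^+ j2.+1)%g i ->
    tpar X1 = 0%N -> tpar X2 = 0%N -> (j1 < j2)%N -> False.
Proof.
move=> hj2 hX1 hX2 t1 s1 t2 s2 tp1 tp2 hlt.
set N := #|porbit sigma i|.
have Hdist : forall x y, (x < N)%N -> (y < N)%N -> (sigma ^+ x)%g i = (sigma ^+ y)%g i -> x = y.
  move=> x y hx hy e.
  have U := uniq_traject_porbit sigma i.
  have hx' : (x < size (traject sigma i N))%N by rewrite size_traject.
  have hy' : (y < size (traject sigma i N))%N by rewrite size_traject.
  have := nth_uniq i hx' hy' U.
  by rewrite !nth_traject // -!permX e eqxx => /esym/eqP.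
pose b kk := (sigma ^+ (j1 + kk))%g i.
have hb : forall kk, b kk.+1 = sigma (b kk).
  by move=> kk; rewrite /b addnS expgSr permM.
set p0 := b 0%N. set q0 := b (j2 - j1)%N.
have ep0 : (sigma ^+ j1)%g i = p0 by rewrite /p0 /b addn0.
have eq0 : (sigma ^+ j2)%g i = q0 by rewrite /q0 /b subnKC // ltnW.
have Hshort : forall X : lab n d, tpar X = 0%N -> (X.2 < n)%N.
  move=> X; rewrite /tpar => h; have := divn_eq X.2 n; rewrite h mul0n add0n => ->.
  exact: ltn_pmod.
pose obj (c : 'I_n) := if c == p0 then X1 else if c == q0 then X2
   else odflt X1 [pick X in S | (top X == c) && (socle X == sigma c)].
have Hobj : forall c, [/\ obj c \in S, top (obj c) = c & socle (obj c) = sigma c].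
  move=> c; rewrite /obj.
  case: (eqVneq c p0) => [->|ne1].
    by split => //; rewrite ?t1 ?s1 ?ep0 // expgSr permM ep0.
  case: (eqVneq c q0) => [->|ne2].
    by split => //; rewrite ?t2 ?s2 ?eq0 // expgSr permM eq0.
  case: pickP => [X /andP[hXS /andP[/eqP ht /eqP hs]] | none] /=.
    by [].
  have [X hXS [ht hs]] := hsigma c.
  by have := none X; rewrite hXS ht hs !eqxx.
pose a kk := nat_of_ord (b kk).
pose s kk := nat_of_ord (obj (b kk)).2.
have hex : exists kk, (0 < kk)%N && (s kk < n)%N.
  exists (j2 - j1)%N; rewrite subn_gt0 hlt /= /s -/q0 /obj eqxx.
  by case: ifP => _; apply: Hshort.
case: (ex_minnP hex) => m /andP[hm0 hsm] hmin.
have hmle : (m <= j2 - j1)%N.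
  apply: hmin; rewrite subn_gt0 hlt /= /s -/q0 /obj eqxx.
  by case: ifP => _; apply: Hshort.
have hbinj : forall x y, (x <= m)%N -> (y <= m)%N -> b x = b y -> x = y.
  move=> x y hx hy e.
  have := Hdist (j1 + x)%N (j1 + y)%N; rewrite -/N.
  move=> /(_ ltac:(lia) ltac:(lia) e); lia.
apply: (@comb n d m a s hd hn).
- by move=> kk; apply: ltn_ord.
- by move=> kk; apply: ltn_ord.
- move=> kk; rewrite /a /s hb.
  have [_ ht hs] := Hobj (b kk).
  by rewrite -hs /socle -[X in (X + _)%N]/(top (obj (b kk))) ht.
- by rewrite /s -/p0 /obj eqxx; apply: Hshort.
- by [].
- by [].
- move=> kk /andP[hk1 hk2]; rewrite leqNgt; apply/negP => hlt'.
  have := hmin kk; rewrite hk1 hlt' => /(_ isT); lia.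
- move=> kk /andP[hk1 hk2]; apply/negP => /eqP e.
  have := hbinj kk 0%N hk2 (leq0n _) (val_inj e); lia.
- move=> kk /andP[hk1 hk2]; apply/negP => /eqP e.
  have := hbinj kk m (ltnW hk2) (leqnn _) (val_inj e); lia.
- move=> u v t hne ht h1 h2 h3 h4.
  have [Su tu su] := Hobj (b u).
  have [Sv tv sv] := Hobj (b v).
  apply: (@nonzero_stHom k n d (obj (b u)) (obj (b v)) t).
  + by rewrite ht; move: tu; rewrite /top => ->.
  + by move: tv; rewrite /top => ->.
  + by move: tv; rewrite /top => ->.
  + by move: tv; rewrite /top => ->.
  + by move: tv; rewrite /top => ->.
  + apply: Hzero => //; apply/eqP => e.
    by move: hne; rewrite /a -tu -tv e eqxx.
Qed.

Theorem lemma4p6 (k : closedFieldType) (n d : nat) (hn : (0 < n)%N) (hd : (2 <= d)%N)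
  (S : {set lab n d}) (hS : is_sms k S) (sigma : {perm 'I_n})
  (hsigma : forall a : 'I_n, exists2 X, X \in S & top X = a /\ socle X = sigma a)
  (i : 'I_n) :
  forall (j1 j2 : nat) (X1 X2 : lab n d),
    (j1 < #|porbit sigma i|)%N -> (j2 < #|porbit sigma i|)%N ->
    X1 \in S -> X2 \in S ->
    top X1 = (sigma ^+ j1)%g i -> socle X1 = (sigma ^+ j1.+1)%g i ->
    top X2 = (sigma ^+ j2)%g i -> socle X2 = (sigma ^+ j2.+1)%g i ->
    tpar X1 = 0%N -> tpar X2 = 0%N -> j1 = j2.
Proof.
move=> j1 j2 X1 X2 hj1 hj2 hX1 hX2 t1 s1 t2 s2 tp1 tp2.
case: hS => Hzero _ _.
case: (ltngtP j1 j2) => // h; exfalso.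
- exact: (@key k n d hn hd S Hzero sigma hsigma i j1 j2 X1 X2 hj2 hX1 hX2 t1 s1 t2 s2 tp1 tp2 h).
- exact: (@key k n d hn hd S Hzero sigma hsigma i j2 j1 X2 X1 hj1 hX2 hX1 t2 s2 t1 s1 tp2 tp1 h).
Qed.
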